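(* Let $x_1\le x_2\le\cdots$ be a sequence and let $x_\ell$ be a target element. Suppose the search accesses the sequence only through comparisons with $x_\ell$, and each comparison independently gives the wrong answer with probability at most a fixed constant less than $1/2$. Then for every constant $Q<1/2$ one can find an index $r$ with $\ell\le r\le 2\ell$, with probability at least $1-Q$, using $O(\lg(\ell/Q))$ comparisons.
   Context: This is the noisy exponential search problem: the goal is to locate $x_\ell$ up to a factor-two overshoot, in the style of exponential search, when comparisons are unreliable. *)

(* Defs.v *)
From Stdlib Require Import Reals List Arith.
Open Scope R_scope.

(* A (deterministic, adaptive) search algorithm: given the list of answers
   received so far, it either asks a comparison of x_i with the target x_l
   ("is x_i < x_l ?"), or stops and outputs an index r. *)
Inductive step : Type := Query (i : nat) | Output (r : nat).
Definition strategy := list bool -> step.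

(* True answer to the comparison "x_i < x_l", ties broken by position. *)
Definition cmp_less (x : nat -> R) (l i : nat) : bool :=
  if Rlt_dec (x i) (x l) then true
  else if Req_EM_T (x i) (x l) then Nat.ltb i l else false.

(* The t-th
   comparison (t = length of history), on index i, is answered wrongly with
   probability q t i, independently of everything else. *)
Fixpoint success_prob (A : strategy) (x : nat -> R) (l : nat)
    (q : nat -> nat -> R) (good : nat -> bool) (n : nat) (h : list bool) : R :=
  match A h with
  | Output r => if good r then 1 else 0
  | Query i =>
      match n with
      | O => 0
      | S n' =>
          let b := cmp_less x l i in
          let e := q (length h) i in
          (1 - e) * success_prob A x l q good n' (h ++ b :: nil)
          + e * success_prob A x l q good n' (h ++ negb b :: nil)
      end
  end.

Definition lg (y : R) : R := ln y / ln 2.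

(* Main.v *)
Require Import Defs.
From Stdlib Require Import Reals List Arith Lia Lra Psatz ZArith.
Open Scope R_scope.

Record st := mkst { sj : nat; sk : nat; sph : bool }.
Definition norm j k := mkst j k (Nat.eqb j 0).
Definition delta (s : st) (c : bool) : st :=
  match s with mkst j k ph =>
  if ph then (if c then (if Nat.eqb k 0 then norm (S j) 0 else norm j (pred k)) else norm j (S k))
  else (if c then mkst j k true else (if Nat.eqb k 0 then norm (pred j) 0 else norm j (pred k)))
  end.
Definition run h := fold_left delta h (norm 0 0).
Definition stoppedb S0 s := Nat.leb (S0 + sj s) (sk s).
Definition qidx s := if sph s then sj s else pred (sj s).
Definition V S0 : strategy := fun h => let s := run h in
  if stoppedb S0 s then Output (2^(sj s)) else Query (2^(qidx s)).

Definition ndist (j js : nat) := ((j - js) + (js - j))%nat.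
Definition base js j k : R := if Nat.eqb j js then (/16)^k else 16^(k + ndist j js).
Definition W js s := (if sph s then (if Nat.leb (sj s) js then /4 else 32) else 1) * base js (sj s) (sk s).
Definition okst s := sph s = false -> sj s <> 0%nat.

Lemma base_pos js j k : 0 < base js j k.
Proof. unfold base; destruct (Nat.eqb j js); apply pow_lt; lra. Qed.

Lemma W_norm js j k : 0 <= W js (norm j k) <= base js j k.
Proof. unfold W, norm; simpl. pose proof (base_pos js j k).
  destruct (Nat.eqb_spec j 0). subst. simpl. lra. lra. Qed.

Lemma base_up js j k : base js j (S k) = if Nat.eqb j js then base js j k / 16 else 16 * base js j k.
Proof. unfold base. destruct (Nat.eqb j js); simpl; field. Qed.

Lemma base_right js j : base js (S j) 0 = if Nat.ltb j js then base js j 0 / 16 else 16 * base js j 0.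
Proof. unfold base, ndist. destruct (Nat.ltb_spec j js).
  - destruct (Nat.eqb_spec (S j) js).
    + subst. rewrite (proj2 (Nat.eqb_neq j (S j))) by lia. replace (S j - j)%nat with 1%nat by lia.
      replace (j - S j)%nat with 0%nat by lia. simpl. field.
    + rewrite (proj2 (Nat.eqb_neq j js)) by lia. replace (js - j)%nat with (S (js - S j)) by lia.
      replace (j - js)%nat with 0%nat by lia. replace (S j - js)%nat with 0%nat by lia. simpl. field.
  - rewrite (proj2 (Nat.eqb_neq (S j) js)) by lia.
    destruct (Nat.eqb_spec j js).
    + subst. replace (S js - js)%nat with 1%nat by lia. replace (js - S js)%nat with 0%nat by lia.
      simpl. field.
    + replace (S j - js)%nat with (S (j - js)) by lia. replace (js - S j)%nat with 0%nat by lia.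
      replace (js - j)%nat with 0%nat by lia. simpl. field.
Qed.

Lemma base_left js j : (0 < j)%nat -> base js (pred j) 0 = if Nat.ltb js j then base js j 0 / 16 else 16 * base js j 0.
Proof. intros Hj. destruct j as [|j]; [lia|]. simpl pred.
  rewrite base_right. destruct (Nat.ltb_spec j js), (Nat.ltb_spec js (S j)); try lia.
  - pose proof (base_pos js j 0). field.
  - pose proof (base_pos js j 0). field.
Qed.

Lemma base_down js j k : base js j k = if Nat.eqb j js then base js j (S k) * 16 else base js j (S k) / 16.
Proof. rewrite base_up. destruct (Nat.eqb j js); field. Qed.

Lemma mix e X Y a b B : 0 <= e <= /256 -> 0 < B -> 0 <= X <= a * B -> 0 <= Y <= b * B ->
  (1 - e) * X + e * Y <= (1 - e) * (a * B) + e * (b * B).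
Proof. intros. nra. Qed.

Lemma base_ne js j k : j <> js -> base js j (S k) = 16 * base js j k /\ base js j k = base js j (S k) / 16.
Proof. intros H. rewrite base_up. rewrite (proj2 (Nat.eqb_neq _ _) H). split; field. Qed.
Lemma base_eq js k : base js js (S k) = base js js k / 16 /\ base js js k = 16 * base js js (S k).
Proof. rewrite base_up, Nat.eqb_refl. split; field. Qed.

Lemma step_lemma js s e : okst s -> 0 <= e <= /256 ->
  let c := Nat.ltb (qidx s) js in
  (1 - e) * W js (delta s c) + e * W js (delta s (negb c)) <= /2 * W js s.
Proof.
  intros Hok He. destruct s as [j k ph]. unfold okst in Hok; simpl in Hok.
  unfold qidx; simpl sph; simpl sj.
  set (B := base js j k). assert (HB : 0 < B) by apply base_pos.
  destruct ph.
  - assert (Ws : W js (mkst j k true) = (if Nat.leb j js then /4 else 32) * B) by reflexivity.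
    rewrite Ws. simpl delta.
    destruct (lt_eq_lt_dec j js) as [[Hlt|Heq]|Hgt].
    + rewrite (proj2 (Nat.ltb_lt _ _) Hlt). rewrite (proj2 (Nat.leb_le j js)) by lia. simpl negb.
      assert (H1 : 0 <= W js (if Nat.eqb k 0 then norm (S j) 0 else norm j (pred k)) <= /16 * B).
      { destruct (Nat.eqb_spec k 0).
        - subst. pose proof (W_norm js (S j) 0). rewrite base_right in H. 
          rewrite (proj2 (Nat.ltb_lt _ _) Hlt) in H. unfold B. lra.
        - pose proof (W_norm js j (pred k)). destruct k; [lia|]. simpl pred in H |- *.
          destruct (base_ne js j k ltac:(lia)) as [_ E]. unfold B. lra. }
      assert (H2 : 0 <= W js (norm j (S k)) <= 16 * B).
      { pose proof (W_norm js j (S k)). destruct (base_ne js j k ltac:(lia)) as [E _]. unfold B. lra. }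
      pose proof (mix e _ _ _ _ B He HB H1 H2). nra.
    + subst j. rewrite Nat.ltb_irrefl, Nat.leb_refl. simpl negb.
      assert (H1 : 0 <= W js (norm js (S k)) <= /16 * B).
      { pose proof (W_norm js js (S k)). destruct (base_eq js k) as [E _]. unfold B. lra. }
      assert (H2 : 0 <= W js (if Nat.eqb k 0 then norm (S js) 0 else norm js (pred k)) <= 16 * B).
      { destruct (Nat.eqb_spec k 0).
        - subst. pose proof (W_norm js (S js) 0). rewrite base_right in H. 
          rewrite Nat.ltb_irrefl in H. unfold B. lra.
        - pose proof (W_norm js js (pred k)). destruct k; [lia|]. simpl pred in H |- *.
          destruct (base_eq js k) as [_ E]. unfold B. lra. }
      pose proof (mix e _ _ _ _ B He HB H1 H2). nra.
    + rewrite (proj2 (Nat.ltb_ge j js)), (proj2 (Nat.leb_gt j js)) by lia. simpl negb.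
      assert (H1 : 0 <= W js (norm j (S k)) <= 16 * B).
      { pose proof (W_norm js j (S k)). destruct (base_ne js j k ltac:(lia)) as [E _]. unfold B. lra. }
      assert (H2 : 0 <= W js (if Nat.eqb k 0 then norm (S j) 0 else norm j (pred k)) <= 16 * B).
      { destruct (Nat.eqb_spec k 0).
        - subst. pose proof (W_norm js (S j) 0). rewrite base_right in H. 
          rewrite (proj2 (Nat.ltb_ge j js)) in H by lia. unfold B. lra.
        - pose proof (W_norm js j (pred k)). destruct k; [lia|]. simpl pred in H |- *.
          destruct (base_ne js j k ltac:(lia)) as [_ E]. unfold B. lra. }
      pose proof (mix e _ _ _ _ B He HB H1 H2). nra.
  - assert (Hj : j <> 0%nat) by auto.
    assert (Ws : W js (mkst j k false) = B) by (unfold W; simpl; unfold B; ring).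
    rewrite Ws. simpl delta.
    assert (Wt : W js (mkst j k true) = (if Nat.leb j js then /4 else 32) * B) by reflexivity.
    destruct (le_lt_dec j js) as [Hle|Hgt].
    + rewrite (proj2 (Nat.ltb_lt (pred j) js)) by lia. simpl negb.
      assert (H1 : 0 <= W js (mkst j k true) <= /4 * B).
      { rewrite Wt, (proj2 (Nat.leb_le j js)) by lia. lra. }
      assert (H2 : 0 <= W js (if Nat.eqb k 0 then norm (pred j) 0 else norm j (pred k)) <= 16 * B).
      { destruct (Nat.eqb_spec k 0).
        - subst. pose proof (W_norm js (pred j) 0). rewrite base_left in H by lia.
          rewrite (proj2 (Nat.ltb_ge js j)) in H by lia. unfold B. lra.
        - pose proof (W_norm js j (pred k)). destruct k; [lia|]. simpl pred in H |- *.
          destruct (Nat.eqb_spec j js).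
          + subst. destruct (base_eq js k) as [_ E]. unfold B. lra.
          + destruct (base_ne js j k ltac:(lia)) as [_ E]. unfold B. lra. }
      pose proof (mix e _ _ _ _ B He HB H1 H2). nra.
    + rewrite (proj2 (Nat.ltb_ge (pred j) js)) by lia. simpl negb.
      assert (H2 : 0 <= W js (mkst j k true) <= 32 * B).
      { rewrite Wt, (proj2 (Nat.leb_gt j js)) by lia. lra. }
      assert (H1 : 0 <= W js (if Nat.eqb k 0 then norm (pred j) 0 else norm j (pred k)) <= /16 * B).
      { destruct (Nat.eqb_spec k 0).
        - subst. pose proof (W_norm js (pred j) 0). rewrite base_left in H by lia.
          rewrite (proj2 (Nat.ltb_lt js j)) in H by lia. unfold B. lra.
        - pose proof (W_norm js j (pred k)). destruct k; [lia|]. simpl pred in H |- *.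
          destruct (base_ne js j k ltac:(lia)) as [_ E]. unfold B. lra. }
      pose proof (mix e _ _ _ _ B He HB H1 H2). nra.
Qed.

Lemma run_app h c : run (h ++ c :: nil) = delta (run h) c.
Proof. unfold run. rewrite fold_left_app. reflexivity. Qed.

Lemma norm_ok j k : okst (norm j k).
Proof. unfold okst, norm; simpl. destruct (Nat.eqb_spec j 0); congruence. Qed.

Lemma delta_ok s c : okst s -> okst (delta s c).
Proof. destruct s as [j k ph]; intros H. destruct ph, c; simpl;
  repeat match goal with |- context [if ?b then _ else _] => destruct b end;
  try apply norm_ok; unfold okst; simpl; auto; discriminate. Qed.

Lemma run_ok h : okst (run h).
Proof. induction h as [|c h IH] using rev_ind. apply norm_ok. rewrite run_app. now apply delta_ok. Qed.

Lemma W_lb js s : /4 * base js (sj s) (sk s) <= W js s.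
Proof. unfold W. pose proof (base_pos js (sj s) (sk s)).
  destruct (sph s); [destruct (Nat.leb (sj s) js)|]; lra. Qed.

Lemma W_nn js s : 0 <= W js s.
Proof. pose proof (W_lb js s). pose proof (base_pos js (sj s) (sk s)). lra. Qed.

Lemma p16 n : 0 < 16 ^ n. Proof. apply pow_lt; lra. Qed.

Lemma base_notstop js S0 j k : (k < S0 + j)%nat -> / 16 ^ (S0 + js) <= base js j k.
Proof. intros H. unfold base. pose proof (p16 (S0 + js)).
  destruct (Nat.eqb_spec j js).
  - subst. rewrite pow_inv. apply Rinv_le_contravar. apply p16. apply Rle_pow; [lra|lia].
  - assert (1 <= 16 ^ (k + ndist j js)) by (apply pow_R1_Rle; lra).
    assert (/ 16 ^ (S0 + js) <= 1). { rewrite <- Rinv_1. apply Rinv_le_contravar; try lra.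
      apply pow_R1_Rle; lra. } lra. Qed.

Lemma base_badstop js S0 j k : (S0 + j <= k)%nat -> j <> js -> 16 ^ (S0 + js) <= base js j k.
Proof. intros H Hn. unfold base. rewrite (proj2 (Nat.eqb_neq _ _) Hn).
  apply Rle_pow; [lra|]. unfold ndist; lia. Qed.

Definition goodf (l : nat) := fun r => andb (Nat.leb l r) (Nat.leb r (2 * l)).

Lemma success_nn A x l q good n h : (forall t i, 0 <= q t i <= 1) ->
  0 <= success_prob A x l q good n h.
Proof. intros Hq. revert h. induction n; intros h; simpl;
  destruct (A h); try (destruct (good r); lra); try lra.
  pose proof (Hq (length h) i). pose proof (IHn (h ++ cmp_less x l i :: nil)).
  pose proof (IHn (h ++ negb (cmp_less x l i) :: nil)). nra. Qed.

Section Virt.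
Variables (x : nat -> R) (l js S0 : nat) (q : nat -> nat -> R).
Hypothesis Htruth : forall idx, cmp_less x l (2 ^ idx) = Nat.ltb idx js.
Hypothesis Hgood : goodf l (2 ^ js) = true.
Hypothesis Hq : forall t i, 0 <= q t i <= /256.

Lemma virt_inv : forall n h,
  1 - success_prob (V S0) x l q (goodf l) n h <=
  ((/2) ^ n * (4 * 16 ^ (S0 + js)) + 4 / 16 ^ (S0 + js)) * W js (run h).
Proof.
  pose proof (p16 (S0 + js)) as P16.
  assert (Hb : forall s, 0 <= 4 / 16 ^ (S0 + js) * W js s).
  { intros s. pose proof (W_nn js s). apply Rmult_le_pos; [|lra].
    unfold Rdiv. apply Rmult_le_pos; [lra|]. left; apply Rinv_0_lt_compat; lra. }
  assert (Ha : forall n s, 0 <= (/2) ^ n * (4 * 16 ^ (S0 + js)) * W js s).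
  { intros n s. pose proof (W_nn js s). apply Rmult_le_pos; [|lra].
    apply Rmult_le_pos; [apply pow_le; lra|lra]. }
  induction n as [|n IH]; intros h.
  - simpl success_prob. unfold V. set (s := run h).
    destruct (Nat.leb_spec (S0 + sj s) (sk s)) as [Hst|Hst]; unfold stoppedb; 
      [rewrite (proj2 (Nat.leb_le _ _) Hst)|rewrite (proj2 (Nat.leb_gt _ _) Hst)].
    + destruct (Nat.eqb_spec (sj s) js) as [E|E].
      * rewrite E, Hgood. pose proof (Hb s). pose proof (Ha 0%nat s).  lra.
      * pose proof (base_badstop js S0 _ _ Hst E). pose proof (W_lb js s).
        pose proof (Ha 0%nat s). 
        assert (1 <= 4 / 16 ^ (S0 + js) * W js s).
        { apply Rle_trans with (4 / 16 ^ (S0 + js) * (/4 * 16 ^ (S0 + js))).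
          right. field. lra. apply Rmult_le_compat_l. unfold Rdiv. apply Rmult_le_pos; [lra|].
          left; apply Rinv_0_lt_compat; lra. lra. }
        destruct (goodf l (2 ^ sj s)); lra.
    + pose proof (base_notstop js S0 _ _ Hst). pose proof (W_lb js s). pose proof (Hb s). 
      simpl pow. 
      assert (1 <= 4 * 16 ^ (S0 + js) * W js s).
      { apply Rle_trans with (4 * 16 ^ (S0 + js) * (/4 * / 16 ^ (S0 + js))).
        right. field. lra. apply Rmult_le_compat_l. lra. lra. }
      lra.
  - simpl success_prob. unfold V at 1. set (s := run h).
    destruct (Nat.leb_spec (S0 + sj s) (sk s)) as [Hst|Hst]; unfold stoppedb; 
      [rewrite (proj2 (Nat.leb_le _ _) Hst)|rewrite (proj2 (Nat.leb_gt _ _) Hst)].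
    + destruct (Nat.eqb_spec (sj s) js) as [E|E].
      * rewrite E, Hgood. pose proof (Hb s). pose proof (Ha (S n) s).  lra.
      * pose proof (base_badstop js S0 _ _ Hst E). pose proof (W_lb js s).
        pose proof (Ha (S n) s). 
        assert (1 <= 4 / 16 ^ (S0 + js) * W js s).
        { apply Rle_trans with (4 / 16 ^ (S0 + js) * (/4 * 16 ^ (S0 + js))).
          right. field. lra. apply Rmult_le_compat_l. unfold Rdiv. apply Rmult_le_pos; [lra|].
          left; apply Rinv_0_lt_compat; lra. lra. }
        destruct (goodf l (2 ^ sj s)); lra.
    + rewrite Htruth.
      set (e := q (length h) (2 ^ qidx s)).
      set (c := Nat.ltb (qidx s) js).
      pose proof (IH (h ++ c :: nil)) as I1. pose proof (IH (h ++ negb c :: nil)) as I2.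
      rewrite run_app in I1, I2. fold s in I1, I2.
      pose proof (step_lemma js s e (run_ok h) (Hq _ _)) as St. fold c in St.
      set (K := (/ 2) ^ n * (4 * 16 ^ (S0 + js)) + 4 / 16 ^ (S0 + js)).
      fold K in I1, I2.
      assert (HK : 0 <= K).
      { unfold K. pose proof (pow_le (/2) n). assert (0 < / 16 ^ (S0 + js)) by (apply Rinv_0_lt_compat; lra).
        unfold Rdiv. assert (0 <= /2) by lra. specialize (H H1). nra. }
      pose proof (Hq (length h) (2 ^ qidx s)) as Hqe. fold e in Hqe.
      pose proof (W_nn js (delta s c)). pose proof (W_nn js (delta s (negb c))). pose proof (W_nn js s).
      set (X := success_prob (V S0) x l q (goodf l) n (h ++ c :: nil)) in *.
      set (Y := success_prob (V S0) x l q (goodf l) n (h ++ negb c :: nil)) in *.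
      assert (1 - ((1 - e) * X + e * Y) <= K * ((1 - e) * W js (delta s c) + e * W js (delta s (negb c)))).
      { assert (1 - ((1 - e) * X + e * Y) = (1 - e) * (1 - X) + e * (1 - Y)) by ring. rewrite H2.
        assert ((1 - e) * (1 - X) <= (1 - e) * (K * W js (delta s c))) by (apply Rmult_le_compat_l; lra).
        assert (e * (1 - Y) <= e * (K * W js (delta s (negb c)))) by (apply Rmult_le_compat_l; lra).
        lra. }
      assert (K * ((1 - e) * W js (delta s c) + e * W js (delta s (negb c))) <= K * (/2 * W js s))
        by (apply Rmult_le_compat_l; lra).
      assert (K * (/2 * W js s) <= ((/ 2) ^ S n * (4 * 16 ^ (S0 + js)) + 4 / 16 ^ (S0 + js)) * W js s).
      { unfold K. simpl pow. pose proof (Hb s). nra. }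
      lra.
Qed.
End Virt.

Fixpoint cntt (w : list bool) : nat := match w with nil => 0 | c :: w' => (if c then 1 else 0) + cntt w' end.
Lemma cntt_app u c : cntt (u ++ c :: nil) = (cntt u + (if c then 1 else 0))%nat.
Proof. induction u; simpl; [lia|]. rewrite IHu. lia. Qed.
Lemma cntt_le u : (cntt u <= length u)%nat.
Proof. induction u as [|[] u]; simpl; lia. Qed.

Definition maj (a : nat) w := Nat.ltb a (cntt w).
Definition wrong b w := if b:bool then (length w - cntt w)%nat else cntt w.
Lemma wrong_app b u c : wrong b (u ++ c :: nil) = (wrong b u + (if Bool.eqb c b then 0 else 1))%nat.
Proof. unfold wrong. rewrite cntt_app, length_app. pose proof (cntt_le u). simpl.
  destruct b, c; simpl; lia. Qed.

Definition bst := (list bool * nat * nat)%type.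
Definition bstep (a : nat) (s : bst) (b : bool) : bst :=
  match s with (vh, c, r) =>
    let c' := (c + (if b then 1 else 0))%nat in
    if Nat.eqb (S r) (2 * a + 1) then (vh ++ Nat.ltb a c' :: nil, 0%nat, 0%nat) else (vh, c', S r)
  end.
Definition brun a h := fold_left (bstep a) h (nil, 0%nat, 0%nat).
Lemma brun_app a h c : brun a (h ++ c :: nil) = bstep a (brun a h) c.
Proof. unfold brun. now rewrite fold_left_app. Qed.
Definition Areal a (V0 : strategy) : strategy := fun h => V0 (fst (fst (brun a h))).

Section Eb.
Variable q : nat -> nat -> R.
Variables (t0 i : nat) (b : bool).
Fixpoint Eb (u : list bool) (rr : nat) (F : list bool -> R) : R :=
  match rr with
  | O => F u
  | S r' => (1 - q (t0 + length u) i) * Eb (u ++ b :: nil) r' F + q (t0 + length u) i * Eb (u ++ negb b :: nil) r' F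
  end.

Lemma Eb_affine rr : forall u F al be, Eb u rr (fun w => al + be * F w) = al + be * Eb u rr F.
Proof. induction rr; intros; simpl; [reflexivity|]. rewrite !IHrr. ring. Qed.
Lemma Eb_ext rr : forall u F F', (forall w, F w = F' w) -> Eb u rr F = Eb u rr F'.
Proof. induction rr; intros; simpl; [auto|]. rewrite (IHrr _ F F'), (IHrr (u ++ negb b :: nil) F F'); auto. Qed.
Hypothesis Hq : forall t, 0 <= q t i <= 1.
Lemma Eb_mono rr : forall u F F', (forall w, length w = (length u + rr)%nat -> F w <= F' w) -> Eb u rr F <= Eb u rr F'.
Proof. induction rr; intros u F F' H; simpl.
  - apply H. lia.
  - pose proof (Hq (t0 + length u)).
    assert (Eb (u ++ b :: nil) rr F <= Eb (u ++ b :: nil) rr F').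
    { apply IHrr. intros w Hw. apply H. rewrite Hw, length_app. simpl. lia. }
    assert (Eb (u ++ negb b :: nil) rr F <= Eb (u ++ negb b :: nil) rr F').
    { apply IHrr. intros w Hw. apply H. rewrite Hw, length_app. simpl. lia. }
    nra.
Qed.
Lemma Eb_nn rr : forall u F, (forall w, 0 <= F w) -> 0 <= Eb u rr F.
Proof. induction rr; intros u F H; simpl; auto.
  pose proof (Hq (t0 + length u)). pose proof (IHrr (u ++ b :: nil) F H).
  pose proof (IHrr (u ++ negb b :: nil) F H). nra. Qed.

Variables (P z : R).
Hypothesis HqP : forall t, q t i <= P.
Hypothesis Hz : 1 <= z.
Lemma Eb_chern rr : forall u, Eb u rr (fun w => z ^ wrong b w) <= z ^ wrong b u * (1 - P + P * z) ^ rr.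
Proof. induction rr; intros u; simpl; [lra|].
  pose proof (IHrr (u ++ b :: nil)) as I1. pose proof (IHrr (u ++ negb b :: nil)) as I2.
  rewrite wrong_app, Bool.eqb_reflx, Nat.add_0_r in I1.
  rewrite wrong_app in I2. replace (Bool.eqb (negb b) b) with false in I2 by (destruct b; reflexivity).
  rewrite pow_add in I2. simpl pow in I2. rewrite Rmult_1_r in I2.
  pose proof (Hq (t0 + length u)). pose proof (HqP (t0 + length u)).
  set (e := q (t0 + length u) i) in *. set (Z := z ^ wrong b u) in *. set (K := (1 - P + P * z) ^ rr) in *.
  assert (0 <= Z) by (apply pow_le; lra). assert (0 <= K) by (apply pow_le; nra).
  assert ((1 - e) * Eb (u ++ b :: nil) rr (fun w => z ^ wrong b w) <= (1 - e) * (Z * K)) by (apply Rmult_le_compat_l; lra).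
  assert (e * Eb (u ++ negb b :: nil) rr (fun w => z ^ wrong b w) <= e * (Z * z * K)) by (apply Rmult_le_compat_l; lra).
  assert ((1 - e) * (Z * K) + e * (Z * z * K) <= Z * ((1 - P + P * z) * K)).
  { assert (0 <= Z * K) by nra. assert (e * (Z * K) * (z - 1) <= P * (Z * K) * (z - 1)).
    { apply Rmult_le_compat_r; [lra|]. apply Rmult_le_compat_r; lra. } nra. }
  lra.
Qed.
End Eb.

Lemma sp_query A x l q good n h i : A h = Query i ->
  success_prob A x l q good (S n) h =
  (1 - q (length h) i) * success_prob A x l q good n (h ++ cmp_less x l i :: nil)
  + q (length h) i * success_prob A x l q good n (h ++ negb (cmp_less x l i) :: nil).
Proof. intros E. simpl. rewrite E. reflexivity. Qed.
Lemma sp_output A x l q good n h r : A h = Output r ->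
  success_prob A x l q good n h = if good r then 1 else 0.
Proof. intros E. destruct n; simpl; rewrite E; reflexivity. Qed.

Section Sim.
Variables (x : nat -> R) (l : nat) (q : nat -> nat -> R) (V0 : strategy) (a : nat) (good : nat -> bool).
Hypothesis Hq : forall t i, 0 <= q t i <= 1.
Let m := (2 * a + 1)%nat.
Definition qv t i := Eb q (m * t) i (cmp_less x l i) nil m
   (fun w => if Bool.eqb (maj a w) (cmp_less x l i) then 0 else 1).

Lemma sim : forall n H vh, brun a H = (vh, 0%nat, 0%nat) -> length H = (m * length vh)%nat ->
  success_prob V0 x l qv good n vh <= success_prob (Areal a V0) x l q good (m * n) H.
Proof.
  induction n as [|n IH]; intros H vh HB HL.
  - assert (EA : Areal a V0 H = V0 vh) by (unfold Areal; rewrite HB; reflexivity).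
    destruct (V0 vh) as [i|r] eqn:EV.
    + simpl. rewrite EV. apply success_nn. auto.
    + rewrite (sp_output _ _ _ _ _ _ _ r EV), (sp_output _ _ _ _ _ _ _ r) by (rewrite EA; auto). lra.
  - assert (EA : Areal a V0 H = V0 vh) by (unfold Areal; rewrite HB; reflexivity).
    destruct (V0 vh) as [i|r] eqn:EV.
    + set (b := cmp_less x l i).
      set (G := fun c => success_prob V0 x l qv good n (vh ++ c :: nil)).
      assert (BL : forall rr u, (length u + rr = m)%nat ->
          (rr <> 0%nat -> brun a (H ++ u) = (vh, cntt u, length u)) ->
          (rr = 0%nat -> brun a (H ++ u) = (vh ++ maj a u :: nil, 0%nat, 0%nat)) ->
          Eb q (length H) i b u rr (fun w => G (maj a w)) <=
          success_prob (Areal a V0) x l q good (rr + m * n) (H ++ u)).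
      { induction rr as [|rr IHr]; intros u Hl H1 H2.
        - simpl Eb. unfold G. apply IH. auto. rewrite length_app, length_app, HL. simpl. lia.
        - assert (EA' : Areal a V0 (H ++ u) = Query i).
          { unfold Areal. rewrite H1 by lia. simpl. auto. }
          change (S rr + m * n)%nat with (S (rr + m * n)).
          rewrite (sp_query _ _ _ _ _ _ _ i EA'). simpl Eb. fold b. rewrite length_app.
          rewrite <- !app_assoc.
          assert (Hc : forall c, Eb q (length H) i b (u ++ c :: nil) rr (fun w => G (maj a w)) <=
                     success_prob (Areal a V0) x l q good (rr + m * n) (H ++ u ++ c :: nil)).
          { intros c. apply IHr.
            - rewrite length_app. simpl. lia.
            - intros Hr. rewrite app_assoc, brun_app, H1 by lia. unfold bstep.
              rewrite (proj2 (Nat.eqb_neq _ _)) by lia. rewrite cntt_app, length_app. simpl.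
              f_equal. f_equal. lia.
            - intros Hr. rewrite app_assoc, brun_app, H1 by lia. unfold bstep.
              rewrite (proj2 (Nat.eqb_eq _ _)) by (fold m; lia). unfold maj. rewrite cntt_app. reflexivity. }
          pose proof (Hc b). pose proof (Hc (negb b)). pose proof (Hq (length H + length u)%nat i). nra. }
      specialize (BL m nil). rewrite app_nil_r in BL.
      replace (m * S n)%nat with (m + m * n)%nat by lia.
      assert (BL' : Eb q (length H) i b nil m (fun w => G (maj a w)) <=
          success_prob (Areal a V0) x l q good (m + m * n) H).
      { apply BL. simpl. lia. intros _. rewrite HB. reflexivity. unfold m; lia. }
      rewrite (sp_query _ _ _ _ _ _ _ i EV). fold b.
      rewrite (Eb_ext q (length H) i b m nil _ (fun w => G b + (G (negb b) - G b) *
         (if Bool.eqb (maj a w) b then 0 else 1))) in BL'.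
      2:{ intros w. destruct (maj a w), b; simpl; ring. }
      assert (Eqv : qv (length vh) i = Eb q (length H) i b nil m (fun w => if Bool.eqb (maj a w) b then 0 else 1)) by (unfold qv; rewrite HL; reflexivity).
      rewrite Eb_affine in BL'. rewrite Eqv. unfold G in BL'. lra.
    + rewrite (sp_output _ _ _ _ _ _ _ r EV), (sp_output _ _ _ _ _ _ _ r) by (rewrite EA; auto). lra.
Qed.
End Sim.

Lemma ratio_alg P a : 0 < P < 1 ->
  / ((1 - P) / P) ^ (a + 1) * (1 - P + P * ((1 - P) / P)) ^ (2 * a + 1) = 2 * P * (4 * P * (1 - P)) ^ a.
Proof. intros HP.
  replace (1 - P + P * ((1 - P) / P)) with (2 * (1 - P)) by (field; lra).
  set (Kk := 2 * (1 - P)). set (zz := (1 - P) / P).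
  rewrite pow_add, (pow_add Kk (2 * a)), pow_mult.
  assert (zz <> 0) by (unfold zz; unfold Rdiv; apply Rmult_integral_contrapositive_currified; [lra|apply Rinv_neq_0_compat; lra]).
  assert (zz ^ a <> 0) by (apply pow_nonzero; auto).
  replace (4 * P * (1 - P)) with (Kk ^ 2 / zz) by (unfold Kk, zz; field; lra).
  unfold Rdiv. rewrite Rpow_mult_distr, pow_inv. simpl pow. unfold Kk, zz. field. split; [|lra].
  apply pow_nonzero. unfold Rdiv; apply Rmult_integral_contrapositive_currified; [lra|apply Rinv_neq_0_compat; lra].
Qed.

Lemma qv_bound x l q a p t i : 0 <= p < /2 -> (forall t i, 0 <= q t i <= p) ->
  (4 * ((p + /2) / 2) * (1 - (p + /2) / 2)) ^ a <= / 256 ->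
  0 <= qv x l q a t i <= / 256.
Proof.
  intros Hp Hq Ha. set (P := (p + /2) / 2) in *. set (z := (1 - P) / P).
  assert (HP : /4 <= P < /2) by (unfold P; lra).
  assert (Hz : 1 <= z) by (unfold z; apply (Rmult_le_reg_r P); [lra|]; field_simplify; lra).
  assert (Hq1 : forall t, 0 <= q t i <= 1) by (intros t'; specialize (Hq t' i); lra).
  unfold qv. set (b := cmp_less x l i). split.
  - apply Eb_nn; auto. intros w; destruct (Bool.eqb _ _); lra.
  - eapply Rle_trans.
    + apply (Eb_mono q _ i b Hq1 (2 * a + 1) nil _ (fun w => 0 + / z ^ (a + 1) * z ^ wrong b w)).
      intros w Hw. simpl in Hw.
      assert (0 < z ^ (a + 1)) by (apply pow_lt; lra).
      destruct (Bool.eqb_spec (maj a w) b) as [E|E].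
      * assert (0 <= / z ^ (a + 1) * z ^ wrong b w).
        { apply Rmult_le_pos; [left; apply Rinv_0_lt_compat; lra| apply pow_le; lra]. } lra.
      * assert (Hw2 : (a + 1 <= wrong b w)%nat).
        { unfold maj in E. unfold wrong. destruct b; destruct (Nat.ltb_spec a (cntt w)); simpl in E; try congruence; lia. }
        assert (z ^ (a + 1) <= z ^ wrong b w) by (apply Rle_pow; auto).
        rewrite Rplus_0_l. apply (Rmult_le_reg_l (z ^ (a + 1))); auto. rewrite <- Rmult_assoc, Rinv_r; lra.
    + rewrite Eb_affine, Rplus_0_l.
      assert (HqP : forall t, q t i <= P) by (intros t'; specialize (Hq t' i); unfold P; lra).
      assert (Hc := Eb_chern q ((2 * a + 1) * t)%nat i b Hq1 P z HqP Hz (2 * a + 1) nil).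
      simpl wrong in Hc. unfold wrong at 2 in Hc. simpl in Hc. destruct b; simpl in Hc; rewrite Rmult_1_l in Hc;
      (eapply Rle_trans; [apply Rmult_le_compat_l; [left; apply Rinv_0_lt_compat, pow_lt; lra| apply Hc]|]);
      unfold z; rewrite ratio_alg by lra; fold P;
      (assert (0 <= (4 * P * (1 - P)) ^ a) by (apply pow_le; nra)); nra.
Qed.

Lemma cmp_ok x l i : (forall i j : nat, (1 <= i <= j)%nat -> x i <= x j) -> (1 <= l)%nat -> (1 <= i)%nat ->
  cmp_less x l i = Nat.ltb i l.
Proof. intros Hx Hl Hi. unfold cmp_less.
  destruct (Rlt_dec (x i) (x l)) as [H|H].
  - destruct (Nat.ltb_spec i l); auto. pose proof (Hx l i ltac:(lia)). lra.
  - destruct (Req_EM_T (x i) (x l)) as [E|E]; auto.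
    destruct (Nat.ltb_spec i l); auto. pose proof (Hx i l ltac:(lia)). lra.
Qed.

Lemma truth_ok l idx : (1 <= l)%nat -> Nat.ltb (2 ^ idx) l = Nat.ltb idx (Nat.log2_up l).
Proof. intros Hl. pose proof (Nat.log2_up_le_pow2 l idx ltac:(lia)) as E.
  destruct (Nat.ltb_spec (2 ^ idx) l), (Nat.ltb_spec idx (Nat.log2_up l)); auto; exfalso.
  - apply E in H0. lia.
  - apply E in H. lia.
Qed.

Lemma good_ok l : (1 <= l)%nat -> goodf l (2 ^ Nat.log2_up l) = true.
Proof. intros Hl. unfold goodf. set (js := Nat.log2_up l).
  pose proof (proj2 (Nat.log2_up_le_pow2 l js ltac:(lia)) (le_n _)) as H1.
  apply andb_true_intro; split; apply Nat.leb_le; auto.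
  destruct js as [|j] eqn:Ej.
  - simpl. lia.
  - pose proof (truth_ok l j Hl) as T. fold js in T. rewrite Ej in T.
    rewrite (proj2 (Nat.ltb_lt j (S j))) in T by lia. apply Nat.ltb_lt in T.
    rewrite Nat.pow_succ_r'. lia.
Qed.

Lemma ln2_pos : 0 < ln 2.
Proof. rewrite <- ln_1. apply ln_increasing; lra. Qed.

Lemma ln_ge0 y : 1 <= y -> 0 <= ln y.
Proof. intros H. destruct (Req_dec y 1). subst; rewrite ln_1; lra.
  rewrite <- ln_1. left. apply ln_increasing; lra. Qed.

Lemma js_bound l : (1 <= l)%nat -> INR (Nat.log2_up l) <= lg (INR l) + 1.
Proof. intros Hl. pose proof ln2_pos. unfold lg.
  destruct (Nat.eq_dec l 1) as [E|E].
  - subst. simpl. rewrite ln_1. unfold Rdiv. lra.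
  - destruct (Nat.log2_up_spec l ltac:(lia)) as [H1 _].
    assert (Hj : (1 <= Nat.log2_up l)%nat).
    { destruct (Nat.log2_up_spec l ltac:(lia)) as [_ H2]. destruct (Nat.log2_up l) eqn:Ej; [|lia]. simpl in H2. lia. }
    apply lt_INR in H1. rewrite pow_INR in H1. simpl INR in H1 at 1.
    replace (1 + 1) with 2 in H1 by ring.
    apply ln_increasing in H1; [|apply pow_lt; lra]. rewrite ln_pow in H1 by lra.
    assert (INR (Nat.pred (Nat.log2_up l)) < ln (INR l) / ln 2).
    { apply (Rmult_lt_reg_r (ln 2)); auto. unfold Rdiv. rewrite Rmult_assoc, Rinv_l; lra. }
    rewrite <- (Nat.succ_pred_pos (Nat.log2_up l)) by lia. rewrite S_INR. lra.
Qed.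

Lemma K_bound Q : 0 < Q < /2 ->
  INR (Z.to_nat (up (lg (/ Q)))) <= lg (/ Q) + 1 /\ / Q <= 2 ^ Z.to_nat (up (lg (/ Q))) /\ 1 <= lg (/ Q).
Proof. intros HQ. pose proof ln2_pos. set (r := lg (/ Q)).
  assert (Hr : 1 <= r).
  { unfold r, lg. apply (Rmult_le_reg_r (ln 2)); auto. unfold Rdiv. rewrite Rmult_assoc, Rinv_l by lra.
    rewrite Rmult_1_l, Rmult_1_r. left. apply ln_increasing. lra.
    apply (Rmult_lt_reg_r Q); [lra|]. rewrite Rinv_l; lra. }
  destruct (archimed r) as [A1 A2].
  assert (Hz : (0 <= up r)%Z) by (apply le_IZR; lra).
  assert (EK : INR (Z.to_nat (up r)) = IZR (up r)) by (rewrite INR_IZR_INZ, Z2Nat.id; auto).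
  split; [lra|]. split; [|auto].
  destruct (Rle_lt_dec (/ Q) (2 ^ Z.to_nat (up r))) as [H1|H1]; auto. exfalso.
  apply ln_increasing in H1; [|apply pow_lt; lra]. rewrite ln_pow in H1 by lra.
  assert (ln (/ Q) = r * ln 2) by (unfold r, lg; field; lra). rewrite H0 in H1.
  rewrite EK in H1. assert (IZR (up r) < r) by (apply (Rmult_lt_reg_r (ln 2)); auto). lra.
Qed.

Lemma numeric Q K js : 0 < Q -> / Q <= 2 ^ K ->
  ((/ 2) ^ (1 + 4 * (K + 1 + 2 * js) + K) * (4 * 16 ^ (K + 1 + js)) + 4 / 16 ^ (K + 1 + js)) * (/ 4 * 16 ^ js) <= Q.
Proof. intros HQ HK.
  assert (E16 : forall n, 16 ^ n = 2 ^ (4 * n)) by (intros; rewrite pow_mult; f_equal; simpl; ring).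
  assert (P2 : forall n, 0 < 2 ^ n) by (intros; apply pow_lt; lra).
  assert (E : forall n, (/2) ^ n * 2 ^ n = 1) by (intros; rewrite pow_inv; field; apply pow_nonzero; lra).
  assert (T1 : (/ 2) ^ (1 + 4 * (K + 1 + 2 * js) + K) * (4 * 16 ^ (K + 1 + js)) * (/ 4 * 16 ^ js) = /2 * / 2 ^ K).
  { rewrite !E16. replace (1 + 4 * (K + 1 + 2 * js) + K)%nat with (4 * (K + 1 + js) + 4 * js + (1 + K))%nat by lia.
    rewrite !pow_add. 
    set (A1 := 2 ^ (4 * (K + 1 + js))). set (A2 := 2 ^ (4 * js)).
    set (B1 := (/2) ^ (4 * (K + 1 + js))). set (B2 := (/2) ^ (4 * js)).
    assert (HB1 : B1 * A1 = 1) by apply E. assert (HB2 : B2 * A2 = 1) by apply E.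
    rewrite (pow_inv 2 K).
    transitivity ((B1 * A1) * (B2 * A2) * (/ 2 * / 2 ^ K)); [field; apply pow_nonzero; lra| rewrite HB1, HB2; ring]. }
  assert (T2 : 4 / 16 ^ (K + 1 + js) * (/ 4 * 16 ^ js) = / 16 * / 16 ^ K).
  { rewrite !pow_add. assert (0 < 16 ^ K) by (apply pow_lt; lra). assert (0 < 16 ^ js) by (apply pow_lt; lra).
    simpl pow. field. lra. }
  assert (H16 : 2 ^ K <= 16 ^ K) by (apply pow_incr; lra).
  assert (I1 : / 2 ^ K <= Q).
  { rewrite <- (Rinv_inv Q). apply Rinv_le_contravar; auto. apply Rinv_0_lt_compat; auto. }
  assert (I2 : / 16 ^ K <= / 2 ^ K) by (apply Rinv_le_contravar; auto).
  rewrite Rmult_plus_distr_r, T1, T2. lra.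
Qed.

Theorem lemma3 :
  forall p : R, 0 <= p < 1/2 ->
  exists C : R,
  forall Q : R, 0 < Q < 1/2 ->
  exists A : strategy,
  forall x : nat -> R, (forall i j : nat, (1 <= i <= j)%nat -> x i <= x j) ->
  forall l : nat, (1 <= l)%nat ->
  forall q : nat -> nat -> R, (forall t i : nat, 0 <= q t i <= p) ->
  exists n : nat,
    INR n <= C * lg (INR l / Q) /\
    success_prob A x l q (fun r => andb (Nat.leb l r) (Nat.leb r (2 * l))) n nil >= 1 - Q.
Proof.
  intros p Hp.
  set (P := (p + /2) / 2). set (c := 4 * P * (1 - P)).
  assert (Hc : 0 <= c < 1) by (unfold c, P; split; nra).
  destruct (pow_lt_1_zero c ltac:(rewrite Rabs_right; lra) (/256) ltac:(lra)) as [a Ha].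
  specialize (Ha a (le_n _)). rewrite Rabs_right in Ha by (apply Rle_ge, pow_le; lra).
  exists (26 * INR (2 * a + 1)).
  intros Q HQ.
  assert (HQ' : 0 < Q < /2) by lra.
  destruct (K_bound Q HQ') as (HK1 & HK2 & HK3).
  set (K := Z.to_nat (up (lg (/ Q)))) in *.
  exists (Areal a (V (K + 1))).
  intros x Hx l Hl q Hq.
  set (js := Nat.log2_up l).
  exists ((2 * a + 1) * (1 + 4 * (K + 1 + 2 * js) + K))%nat. split.
  - pose proof (js_bound l Hl) as Hjs. fold js in Hjs.
    assert (Hll : 0 <= lg (INR l)).
    { unfold lg. apply Rmult_le_pos; [apply ln_ge0; apply (le_INR 1); auto| left; apply Rinv_0_lt_compat, ln2_pos]. }
    assert (Elg : lg (INR l / Q) = lg (INR l) + lg (/ Q)).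
    { unfold lg, Rdiv. rewrite ln_mult. ring. apply (lt_INR 0); lia. apply Rinv_0_lt_compat; lra. }
    rewrite Elg. rewrite mult_INR. repeat (rewrite plus_INR || rewrite mult_INR). simpl INR.
    assert (0 <= INR a) by apply pos_INR.
    assert (0 <= INR js) by apply pos_INR.
    assert (1 + 4 * (INR K + 1 + 2 * INR js) + INR K <= 26 * (lg (INR l) + lg (/ Q))) by lra.
    assert (0 <= 2 * INR a + 1) by lra. nra.
  - assert (Hq1 : forall t i, 0 <= q t i <= 1) by (intros t i; specialize (Hq t i); lra).
    pose proof (sim x l q (V (K + 1)) a (goodf l) Hq1 (1 + 4 * (K + 1 + 2 * js) + K) nil nil eq_refl ltac:(simpl; lia)) as S1.
    assert (Htr : forall idx, cmp_less x l (2 ^ idx) = Nat.ltb idx js).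
    { intros idx. rewrite cmp_ok; auto. apply truth_ok; auto. pose proof (Nat.pow_nonzero 2 idx). lia. }
    assert (Hqv : forall t i, 0 <= qv x l q a t i <= / 256).
    { intros t i. apply qv_bound with p; auto. lra. fold P. fold c. lra. }
    pose proof (virt_inv x l js (K + 1) (qv x l q a) Htr (good_ok l Hl) Hqv (1 + 4 * (K + 1 + 2 * js) + K) nil) as S2.
    assert (EW : W js (run nil) = / 4 * 16 ^ js).
    { unfold run, W, base, ndist. simpl. destruct js; simpl; [ring|]. reflexivity. }
    rewrite EW in S2. replace (K + 1 + js)%nat with (K + 1 + js)%nat in S2 by lia.
    assert (N := numeric Q K js ltac:(lra) HK2).
    replace (K + 1 + js)%nat with (K + 1 + js)%nat in N by lia.
    unfold goodf in S1, S2. apply Rle_ge. lra.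
Qed.
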